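(* Consider the 2-user system below and any statistics-unaware algorithm $\pi$ that transmits (i.e., chooses a nonzero vector) whenever at least one channel is ON. Then there exists a PMF $P\in\{\text{A},\text{B}\}$ for $S[t]$ such that, when $S[t]$ is i.i.d. with PMF $P$ and $\pi$ is run, $$\phi\big(\mathbb{E}[\overline{\mu}_1[T]],\,\mathbb{E}[\overline{\mu}_2[T]]\big)\;\le\;\phi^{opt}_P-\frac{1}{35T}\qquad\text{for all }T\in\{2,3,4,\ldots\},$$ where $\phi^{opt}_P=\log(1+3/4)+\log(1+1/4)$ is the optimal utility under $P$ (the same value for both A and B).
   Context: Two-user ON/OFF system: slotted time $t\in\{0,1,2,\ldots\}$; channel states $S[t]\in\{(ON,OFF),(ON,ON),(OFF,ON)\}$ are i.i.d. over slots. The allowed decision sets are: if $S[t]=(ON,OFF)$, $(\mu_1[t],\mu_2[t])\in\{(0,0),(1,0)\}$; if $S[t]=(ON,ON)$, $(\mu_1[t],\mu_2[t])\in\{(0,0),(1,0),(0,1)\}$; if $S[t]=(OFF,ON)$, $(\mu_1[t],\mu_2[t])\in\{(0,0),(0,1)\}$. PMF A assigns probabilities $3/4,1/4,0$ and PMF B assigns $0,1/4,3/4$ to $(ON,OFF),(ON,ON),(OFF,ON)$ respectively. The utility is $\phi(\gamma_1,\gamma_2)=\log(1+\gamma_1)+\log(1+\gamma_2)$ on $[0,1]^2$ (natural log). $\overline{\mu}_i[T]=\frac1T\sum_{t=0}^{T-1}\mu_i[t]$. A statistics-unaware algorithm is a fixed (possibly randomized) causal rule choosing $\mu[t]$ in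 the allowed set as a function of the current and past channel observations, past decisions, and internal randomness only; it is fixed before the PMF is chosen and does not depend on the PMF. The optimal utility under a PMF $P$ is $\phi^{opt}_P=\max_{x\in\Lambda_P}\phi(x)$, where $\Lambda_P$ is the set of expectations $\mathbb{E}[\mu[0]]$ achievable under $P$ by any (possibly randomized) rule choosing $\mu[0]$ from the allowed set given $S[0]$. *)

(* Defs.v *)
From Stdlib Require Import Reals Lra List.
Import ListNotations.
Open Scope R_scope.

Inductive State := ON_OFF | ON_ON | OFF_ON.

Inductive Dec := D00 | D10 | D01.

Definition mu1 (d : Dec) : R := match d with D10 => 1 | _ => 0 end.
Definition mu2 (d : Dec) : R := match d with D01 => 1 | _ => 0 end.

Definition allowed (s : State) (d : Dec) : Prop :=
  match s, d with
  | _, D00 => True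
  | ON_OFF, D10 => True
  | ON_ON, _ => True
  | OFF_ON, D01 => True
  | _, _ => False
  end.

Definition sum_state (f : State -> R) : R := f ON_OFF + f ON_ON + f OFF_ON.
Definition sum_dec (f : Dec -> R) : R := f D00 + f D10 + f D01.

Definition pmfA (s : State) : R :=
  match s with ON_OFF => 3/4 | ON_ON => 1/4 | OFF_ON => 0 end.
Definition pmfB (s : State) : R :=
  match s with ON_OFF => 0 | ON_ON => 1/4 | OFF_ON => 3/4 end.

(* A history: the past (state, decision) pairs, most recent first. *)
Definition history := list (State * Dec).

(* A statistics-unaware randomized causal algorithm, in behavioral form:
   alg h s d = probability of choosing decision d at the current slot, given
   the past history h of observed states and decisions and the current state s.
   It does not take the PMF as an argument. *)
Definition algorithm := history -> State -> Dec -> R.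

Definition valid_alg (alg : algorithm) : Prop :=
  (forall h s d, 0 <= alg h s d) /\
  (forall h s, sum_dec (alg h s) = 1) /\
  (forall h s d, ~ allowed s d -> alg h s d = 0).

(* At least one channel is ON in every state, so "transmits whenever at least
   one channel is ON" means the zero vector is never chosen. *)
Definition always_transmits (alg : algorithm) : Prop :=
  forall h s, alg h s D00 = 0.

Fixpoint exp_future (P : State -> R) (alg : algorithm) (f : Dec -> R)
    (h : history) (n : nat) : R :=
  match n with
  | O => 0
  | S n' => sum_state (fun s => P s * sum_dec (fun d =>
              alg h s d * (f d + exp_future P alg f ((s, d) :: h) n')))
  end.

Definition exp_avg (P : State -> R) (alg : algorithm) (f : Dec -> R) (T : nat) : R :=
  exp_future P alg f [] T / INR T.

Definition phi (g1 g2 : R) : R := ln (1 + g1) + ln (1 + g2).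

Definition in_Lambda (P : State -> R) (x1 x2 : R) : Prop :=
  exists r : State -> Dec -> R,
    (forall s d, 0 <= r s d) /\ (forall s, sum_dec (r s) = 1) /\
    (forall s d, ~ allowed s d -> r s d = 0) /\
    x1 = sum_state (fun s => P s * sum_dec (fun d => r s d * mu1 d)) /\
    x2 = sum_state (fun s => P s * sum_dec (fun d => r s d * mu2 d)).

Definition is_phi_opt (P : State -> R) (v : R) : Prop :=
  (forall x1 x2, in_Lambda P x1 x2 -> phi x1 x2 <= v) /\
  (exists x1 x2, in_Lambda P x1 x2 /\ phi x1 x2 = v).

Definition phi_opt_value : R := ln (1 + 3/4) + ln (1 + 1/4).

(* Main.v *)
Require Import Defs.
From Stdlib Require Import Reals Lra Lia List.
Import ListNotations.
Open Scope R_scope.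

Lemma ln_le x y : 0 < x -> x <= y -> ln x <= ln y.
Proof.
  intros Hx Hxy. destruct (Rle_lt_or_eq_dec _ _ Hxy) as [H|H].
  - left; apply ln_increasing; auto.
  - rewrite H; lra.
Qed.

Lemma ln_le_lin z : 0 < z -> ln z <= z - 1.
Proof.
  intro Hz.
  assert (H : z <= exp (z - 1)).
  { destruct (Req_dec (z - 1) 0) as [E|E].
    - rewrite E, exp_0. lra.
    - pose proof (exp_ineq1 _ E). lra. }
  rewrite <- (ln_exp (z - 1)).
  apply ln_le; auto.
Qed.

Lemma tangent y y0 : 0 < y -> 0 < y0 -> ln y <= ln y0 + (y - y0) / y0.
Proof.
  intros Hy Hy0.
  assert (E : ln y = ln y0 + ln (y / y0)).
  { unfold Rdiv. rewrite ln_mult, ln_Rinv; try lra.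
    - apply Rinv_0_lt_compat; lra. }
  rewrite E.
  pose proof (ln_le_lin (y / y0)) as L.
  assert (0 < y / y0) by (apply Rdiv_lt_0_compat; lra).
  specialize (L H).
  assert (y / y0 - 1 = (y - y0) / y0) by (field; lra).
  lra.
Qed.

Section Facts.
Variable alg : algorithm.
Hypothesis V : valid_alg alg.
Hypothesis W : always_transmits alg.

Lemma facts h :
  alg h ON_OFF D10 = 1 /\ alg h ON_OFF D01 = 0 /\ alg h OFF_ON D10 = 0 /\
  alg h OFF_ON D01 = 1 /\ alg h ON_ON D01 = 1 - alg h ON_ON D10 /\
  0 <= alg h ON_ON D10 <= 1.
Proof.
  destruct V as [P [S N]].
  pose proof (S h ON_OFF) as S1. pose proof (S h ON_ON) as S2.
  pose proof (S h OFF_ON) as S3. unfold sum_dec in *.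
  rewrite !W in *.
  assert (a : alg h ON_OFF D01 = 0) by (apply N; simpl; tauto).
  assert (b : alg h OFF_ON D10 = 0) by (apply N; simpl; tauto).
  pose proof (P h ON_ON D10). pose proof (P h ON_ON D01).
  repeat split; lra.
Qed.

Definition q h := alg h ON_ON D10.

Lemma stepA f h n :
  exp_future pmfA alg f h (S n) =
  3/4 * (f D10 + exp_future pmfA alg f ((ON_OFF, D10) :: h) n) +
  1/4 * (q h * (f D10 + exp_future pmfA alg f ((ON_ON, D10) :: h) n) +
         (1 - q h) * (f D01 + exp_future pmfA alg f ((ON_ON, D01) :: h) n)).
Proof.
  destruct (facts h) as [a [b [c [d [e _]]]]].
  cbn [exp_future]. unfold sum_state, sum_dec, pmfA, q.
  rewrite !W, a, b, e. ring.
Qed.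

Lemma stepB f h n :
  exp_future pmfB alg f h (S n) =
  3/4 * (f D01 + exp_future pmfB alg f ((OFF_ON, D01) :: h) n) +
  1/4 * (q h * (f D10 + exp_future pmfB alg f ((ON_ON, D10) :: h) n) +
         (1 - q h) * (f D01 + exp_future pmfB alg f ((ON_ON, D01) :: h) n)).
Proof.
  destruct (facts h) as [a [b [c [d [e _]]]]].
  cbn [exp_future]. unfold sum_state, sum_dec, pmfB, q.
  rewrite !W, c, d, e. ring.
Qed.

Lemma qb h : 0 <= q h <= 1.
Proof. unfold q; apply facts. Qed.

Lemma A2 n : forall h, 0 <= exp_future pmfA alg mu2 h n <= INR n / 4.
Proof.
  induction n; intro h.
  - simpl; lra.
  - rewrite stepA, S_INR. simpl mu2.
    pose proof (IHn ((ON_OFF, D10) :: h)). pose proof (IHn ((ON_ON, D10) :: h)).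
    pose proof (IHn ((ON_ON, D01) :: h)). pose proof (qb h). nra.
Qed.

Lemma A2s n h : exp_future pmfA alg mu2 h (S n) <= INR (S n) / 4 - q h / 4.
Proof.
  rewrite stepA, S_INR. simpl mu2.
  pose proof (A2 n ((ON_OFF, D10) :: h)). pose proof (A2 n ((ON_ON, D10) :: h)).
  pose proof (A2 n ((ON_ON, D01) :: h)). pose proof (qb h). nra.
Qed.

Lemma A12 n : forall h, exp_future pmfA alg mu1 h n = INR n - exp_future pmfA alg mu2 h n.
Proof.
  induction n; intro h.
  - simpl; lra.
  - rewrite !stepA, !IHn, S_INR. simpl mu1; simpl mu2. lra.
Qed.

Lemma B1 n : forall h, 0 <= exp_future pmfB alg mu1 h n <= INR n / 4.
Proof.
  induction n; intro h.
  - simpl; lra.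
  - rewrite stepB, S_INR. simpl mu1.
    pose proof (IHn ((OFF_ON, D01) :: h)). pose proof (IHn ((ON_ON, D10) :: h)).
    pose proof (IHn ((ON_ON, D01) :: h)). pose proof (qb h). nra.
Qed.

Lemma B1s n h : exp_future pmfB alg mu1 h (S n) <= INR (S n) / 4 - (1 - q h) / 4.
Proof.
  rewrite stepB, S_INR. simpl mu1.
  pose proof (B1 n ((OFF_ON, D01) :: h)). pose proof (B1 n ((ON_ON, D10) :: h)).
  pose proof (B1 n ((ON_ON, D01) :: h)). pose proof (qb h). nra.
Qed.

Lemma B21 n : forall h, exp_future pmfB alg mu2 h n = INR n - exp_future pmfB alg mu1 h n.
Proof.
  induction n; intro h.
  - simpl; lra.
  - rewrite !stepB, !IHn, S_INR. simpl mu1; simpl mu2. lra.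
Qed.

End Facts.

Lemma key (T y : R) : 2 <= T -> 0 <= y -> y <= 1/4 - 1/(8*T) ->
  ln (1 + (1 - y)) + ln (1 + y) <= phi_opt_value - 1 / (35 * T).
Proof.
  intros HT Hy0 Hy.
  unfold phi_opt_value.
  pose proof (tangent (1 + (1 - y)) (1 + 3/4)) as t1.
  pose proof (tangent (1 + y) (1 + 1/4)) as t2.
  assert (y <= 1/4) by (assert (0 < 1/(8*T)) by (apply Rdiv_lt_0_compat; lra); lra).
  specialize (t1 ltac:(lra) ltac:(lra)). specialize (t2 ltac:(lra) ltac:(lra)).
  assert (E : 1 / (35 * T) = (8/35) * (1 / (8 * T))) by (field; lra).
  rewrite E.
  assert (E1 : (1 + (1 - y) - (1 + 3/4)) / (1 + 3/4) = (1/4 - y) * (4/7)) by field.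
  assert (E2 : (1 + y - (1 + 1/4)) / (1 + 1/4) = (y - 1/4) * (4/5)) by field.
  lra.
Qed.

Lemma optA : is_phi_opt pmfA phi_opt_value.
Proof.
  split.
  - intros x1 x2 [r [P [S [N [E1 E2]]]]].
    unfold sum_state, sum_dec, pmfA, mu1, mu2 in E1, E2.
    assert (a : r ON_OFF D01 = 0) by (apply N; simpl; tauto).
    pose proof (S ON_OFF) as S1; pose proof (S ON_ON) as S2; unfold sum_dec in S1, S2.
    pose proof (P ON_OFF D00); pose proof (P ON_OFF D10); pose proof (P ON_ON D00);
    pose proof (P ON_ON D10); pose proof (P ON_ON D01).
    assert (h1 : 0 <= x1 /\ 0 <= x2 /\ x2 <= 1/4 /\ x1 + x2 <= 1) by (rewrite E1, E2; nra).
    unfold phi, phi_opt_value.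
    rewrite <- !ln_mult by lra.
    apply ln_le. nra. nra.
  - exists (3/4), (1/4). split.
    + exists (fun s d => match s, d with
                  | ON_OFF, D10 => 1 | ON_ON, D01 => 1 | OFF_ON, D01 => 1 | _, _ => 0 end).
      repeat split.
      * intros [] []; lra.
      * intros []; unfold sum_dec; lra.
      * intros [] []; simpl; tauto.
      * unfold sum_state, sum_dec, pmfA, mu1; lra.
      * unfold sum_state, sum_dec, pmfA, mu2; lra.
    + reflexivity.
Qed.

Lemma optB : is_phi_opt pmfB phi_opt_value.
Proof.
  split.
  - intros x1 x2 [r [P [S [N [E1 E2]]]]].
    unfold sum_state, sum_dec, pmfB, mu1, mu2 in E1, E2.
    assert (a : r OFF_ON D10 = 0) by (apply N; simpl; tauto).
    pose proof (S OFF_ON) as S1; pose proof (S ON_ON) as S2; unfold sum_dec in S1, S2.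
    pose proof (P OFF_ON D00); pose proof (P OFF_ON D01); pose proof (P ON_ON D00);
    pose proof (P ON_ON D10); pose proof (P ON_ON D01).
    assert (h1 : 0 <= x1 /\ 0 <= x2 /\ x1 <= 1/4 /\ x1 + x2 <= 1) by (rewrite E1, E2; nra).
    unfold phi, phi_opt_value.
    rewrite <- !ln_mult by lra.
    apply ln_le. nra. nra.
  - exists (1/4), (3/4). split.
    + exists (fun s d => match s, d with
                  | ON_OFF, D10 => 1 | ON_ON, D10 => 1 | OFF_ON, D01 => 1 | _, _ => 0 end).
      repeat split.
      * intros [] []; lra.
      * intros []; unfold sum_dec; lra.
      * intros [] []; simpl; tauto.
      * unfold sum_state, sum_dec, pmfB, mu1; lra.
      * unfold sum_state, sum_dec, pmfB, mu2; lra.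
    + unfold phi, phi_opt_value. ring.
Qed.

Theorem mainTheorem7 :
  forall alg : algorithm, valid_alg alg -> always_transmits alg ->
  exists P : State -> R, (P = pmfA \/ P = pmfB) /\
    is_phi_opt P phi_opt_value /\
    (forall T : nat, (2 <= T)%nat ->
       phi (exp_avg P alg mu1 T) (exp_avg P alg mu2 T)
         <= phi_opt_value - 1 / (35 * INR T)).
Proof.
  intros alg V W.
  destruct (Rle_lt_dec (1/2) (q alg [])) as [Hq|Hq].
  - exists pmfA. split; [left; reflexivity|]. split; [exact optA|].
    intros T HT.
    assert (HT' : 2 <= INR T) by (apply (le_INR 2); exact HT).
    destruct T as [|n]; [lia|].
    unfold exp_avg, phi. rewrite (A12 alg V W).
    set (F := exp_future pmfA alg mu2 [] (S n)).
    pose proof (A2 alg V W (S n) []) as b. pose proof (A2s alg V W n []) as b2.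
    fold F in b, b2.
    assert (E : (INR (S n) - F) / INR (S n) = 1 - F / INR (S n)) by (field; lra).
    rewrite E. apply key; [lra| |].
    + unfold Rdiv; apply Rmult_le_pos; [lra| left; apply Rinv_0_lt_compat; lra].
    + apply (Rmult_le_reg_r (INR (S n))); [lra|].
      unfold Rdiv. field_simplify; try lra.
  - exists pmfB. split; [right; reflexivity|]. split; [exact optB|].
    intros T HT.
    assert (HT' : 2 <= INR T) by (apply (le_INR 2); exact HT).
    destruct T as [|n]; [lia|].
    unfold exp_avg, phi. rewrite (B21 alg V W).
    set (F := exp_future pmfB alg mu1 [] (S n)).
    pose proof (B1 alg V W (S n) []) as b. pose proof (B1s alg V W n []) as b2.
    fold F in b, b2.
    assert (E : (INR (S n) - F) / INR (S n) = 1 - F / INR (S n)) by (field; lra).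
    rewrite E, Rplus_comm. apply key; [lra| |].
    + unfold Rdiv; apply Rmult_le_pos; [lra| left; apply Rinv_0_lt_compat; lra].
    + apply (Rmult_le_reg_r (INR (S n))); [lra|].
      unfold Rdiv. field_simplify; try lra.
Qed.
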